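(* Let $\{\mathsf{P}_\theta : \theta \in \mathbb{T}\}$ be a statistical model for data $Y$ taking values in $\mathbb{Y}$, with likelihood $\theta \mapsto L_y(\theta)$ and maximum likelihood estimator $\hat\theta_y$ existing for each $y$. Let $R(y,\theta) = L_y(\theta)/L_y(\hat\theta_y)$, let $\pi_y(\theta) = \mathsf{P}_\theta\{R(Y,\theta) \le R(y,\theta)\}$, and define $\overline{\Pi}_y(H) = \sup_{\theta \in H} \pi_y(\theta)$ and $\underline{\Pi}_y(H) = 1 - \overline{\Pi}_y(H^c)$ for $H \subseteq \mathbb{T}$. Then for all $\alpha \in [0,1]$: (a) for any given $H \subseteq \mathbb{T}$, the test that rejects $H$ if and only if $\overline{\Pi}_Y(H) \le \alpha$ has Type I error probability at most $\alpha$, i.e., \[ \sup_{\Theta \in H} \mathsf{P}_\Theta\{ \overline{\Pi}_Y(H) \le \alpha \} \le \alpha; \] (b) the set $C_\alpha(Y) = \{\theta \in \mathbb{T} : \pi_Y(\theta) > \alpha\}$ has coverage probability at least $1-\alpha$, i.e., \[ \sup_{\Theta \in \mathbb{T}} \mathsf{P}_\Theta\{ C_\alpha(Y) \not\ni \Theta \} \le \alpha. \]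
   Context: Here $\Theta$ denotes the true parameter value and $Y \sim \mathsf{P}_\Theta$. The pair $(\underline{\Pi}_y, \overline{\Pi}_y)$ is the necessity–possibility measure pair (the inferential model output) determined by the possibility contour $\pi_y$. *)

(* Defs.v *)
From HB Require Import structures.
From mathcomp Require Import all_boot all_order all_algebra.
From mathcomp Require Import all_classical all_reals all_analysis.
Set Implicit Arguments. Unset Strict Implicit. Unset Printing Implicit Defensive.
Import Order.TTheory GRing.Theory Num.Theory.
Local Open Scope classical_set_scope.
Local Open Scope ring_scope.

Section Defs.
Context {d : measure_display} {Y : measurableType d} {R : realType} {T : Type}.

Definition rellik (f : T -> Y -> R) (thetahat : Y -> T) (y : Y) (theta : T) : R :=
  f theta y / f (thetahat y) y.

Definition contour (P : T -> probability Y R) (f : T -> Y -> R)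
  (thetahat : Y -> T) (y : Y) (theta : T) : \bar R :=
  P theta [set y' | rellik f thetahat y' theta <= rellik f thetahat y theta].

Definition upper_poss (P : T -> probability Y R) (f : T -> Y -> R)
  (thetahat : Y -> T) (y : Y) (H : set T) : \bar R :=
  ereal_sup [set contour P f thetahat y theta | theta in H].

Definition lower_poss (P : T -> probability Y R) (f : T -> Y -> R)
  (thetahat : Y -> T) (y : Y) (H : set T) : \bar R :=
  (1 - upper_poss P f thetahat y (~` H))%E.

(* outer probability of an arbitrary (possibly non-measurable) event *)
Definition outer_prob (Q : probability Y R) (A : set Y) : \bar R :=
  ereal_inf [set Q B | B in [set B | measurable B /\ A `<=` B]].

End Defs.

(* Main.v *)
Require Import Defs.
From HB Require Import structures.
From mathcomp Require Import all_boot all_order all_algebra.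
From mathcomp Require Import all_classical all_reals all_analysis.
From mathcomp Require Import measurable_realfun.
Import Order.TTheory GRing.Theory Num.Theory.
Local Open Scope classical_set_scope.
Local Open Scope ring_scope.

Section Key.
Context {d : measure_display} {Y : measurableType d} {R : realType}.
Variables (Q : probability Y R) (X : Y -> R).
Hypothesis mX : forall c : R, measurable [set y | X y <= c].
Variable alpha : R.
Hypothesis alpha_ge0 : 0 <= alpha.

Let S := [set x : R | (Q [set y | (X y <= x)%R] <= alpha%:E)%E].

Lemma S_down x x' : x <= x' -> S x' -> S x.
Proof.
move=> xx' Sx'; rewrite /S /=; apply: le_trans Sx'.
apply: le_measure; rewrite ?inE; [exact: mX|exact: mX|].
by move=> y /= /le_trans; apply.
Qed.

Lemma union_le (g : nat -> R) : {homo g : n m / (n <= m)%N >-> n <= m} ->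
  (forall n, S (g n)) ->
  (Q (\bigcup_n [set y | (X y <= g n)%R]) <= alpha%:E)%E.
Proof.
move=> ndg Sg.
have := @nondecreasing_cvg_mu _ _ _ Q (fun n => [set y | X y <= g n]).
move=> /(_ (fun n => mX _)) /(_ (bigcup_measurable (fun n _ => mX _))).
have nd : nondecreasing_seq (fun n => [set y | X y <= g n]).
  by move=> n m nm; apply/subsetPset => y /= /le_trans; apply; apply: ndg.
move=> /(_ nd) cv.
rewrite -(cvg_lim _ cv) //; apply: lime_le; first by apply/cvg_ex; eexists; exact: cv.
by apply: nearW => n; apply: Sg.
Qed.


Lemma key : (outer_prob Q [set y | (Q [set y' | (X y' <= X y)%R] <= alpha%:E)%E] <= alpha%:E)%E.
Proof.
have ob B : measurable B -> [set y | S (X y)] `<=` B -> (Q B <= alpha%:E)%E ->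
    (outer_prob Q [set y | S (X y)] <= alpha%:E)%E.
  move=> mB EB QB; apply: le_trans QB; apply: ereal_inf_lbound; exists B => //.
have mU (g : nat -> R) : measurable (\bigcup_n [set y | (X y <= g n)%R]).
  exact: bigcup_measurable (fun n _ => mX _).
case: (pselect (exists x, S x)) => [[x0 Sx0]|noS]; last first.
  apply: (ob set0) => //; first by move=> y Sy; apply: noS; exists (X y).
  by rewrite measure0 lee_fin.
case: (pselect (has_ubound S)) => [ubS|nubS]; last first.
  have Sn (n : nat) : S n%:R.
    apply: contrapT => nSn; apply: nubS; exists n%:R => x Sx.
    rewrite leNgt; apply/negP => nx; apply: nSn; exact: S_down (ltW nx) Sx.
  apply: (ob _ (mU (fun n => n%:R))); last first.
    by apply: union_le => // n m nm; rewrite ler_nat.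
  move=> y _; exists (Num.bound `|X y|) => //=.
  apply: le_trans (ler_norm _) _; apply: ltW; apply: archi_boundP.
  exact: normr_ge0.
have hs : has_sup S by split => //; exists x0.
case: (pselect (S (sup S))) => [Ss|nSs].
  apply: (ob _ (mX (sup S))) => //.
  by move=> y Sy; apply: sup_upper_bound.
pose g (n : nat) := sup S - (n.+1%:R)^-1.
apply: (ob _ (mU g)); last first.
  apply: union_le.
    move=> n m nm; rewrite /g lerD2l lerN2 lef_pV2 ?posrE ?ltr0Sn //.
    by rewrite ler_nat.
  move=> n; have ipos : 0 < (n.+1%:R : R)^-1 by rewrite invr_gt0 ltr0Sn.
  have [e Se ge] := @sup_adherent _ S _ ipos hs.
  exact: S_down (ltW ge) Se.
move=> y Sy /=.
have lt : X y < sup S.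
  rewrite lt_neqAle sup_upper_bound // andbT; apply/eqP => E.
  by apply: nSs; rewrite -E.
have dpos : 0 < sup S - X y by rewrite subr_gt0.
exists (Num.bound (sup S - X y)^-1) => //=.
rewrite /g lerBrDr -lerBrDl; apply: ltW.
rewrite -[X in _ < X]invrK ltf_pV2 ?posrE ?invr_gt0 ?ltr0Sn //.
apply: lt_le_trans (archi_boundP _) _; first by rewrite ltW // invr_gt0.
by rewrite ler_nat.
Qed.
End Key.

Lemma outer_mono {d : measure_display} {Y : measurableType d} {R : realType}
  (Q : probability Y R) (A A' : set Y) : A `<=` A' ->
  (outer_prob Q A <= outer_prob Q A')%E.
Proof.
move=> AA'; apply: le_ereal_inf_tmp => _ [B [mB A'B] <-].
apply: ereal_inf_lbound; exists B => //; split => //; exact: subset_trans A'B.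
Qed.

Theorem corollary1 (d : measure_display) (Y : measurableType d) (R : realType)
  (T : Type) (P : T -> probability Y R)
  (mu : {measure set Y -> \bar R}) (f : T -> Y -> R) (thetahat : Y -> T)
  (* f theta is the density (likelihood) of P theta w.r.t. mu *)
  (f_ge0 : forall theta y, 0 <= f theta y)
  (f_meas : forall theta, measurable_fun setT (f theta))
  (P_dens : forall theta (A : set Y), measurable A ->
     P theta A = (\int[mu]_(y in A) (f theta y)%:E)%E)
  (* thetahat y is a maximum likelihood estimator *)
  (mle_max : forall y theta, f theta y <= f (thetahat y) y)
  (mle_pos : forall y, 0 < f (thetahat y) y)
  (mle_meas : measurable_fun setT (fun y => f (thetahat y) y))
  (alpha : R) (alpha_ge0 : 0 <= alpha) (alpha_le1 : alpha <= 1) :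
  (forall H : set T,
     (ereal_sup [set outer_prob (P Th)
                   [set y | (upper_poss P f thetahat y H <= alpha%:E)%E]
                 | Th in H] <= alpha%:E)%E)
  /\
  (ereal_sup [set outer_prob (P Th)
                [set y | ~ (alpha%:E < contour P f thetahat y Th)%E]
              | Th in [set: T]] <= alpha%:E)%E.
Proof.
have K th : (outer_prob (P th)
    [set y | (contour P f thetahat y th <= alpha%:E)%E] <= alpha%:E)%E.
  apply: (@key _ _ _ (P th) (fun y => rellik f thetahat y th)) => // c.
  have -> : [set y | rellik f thetahat y th <= c] =
            [set y | f th y <= c * f (thetahat y) y].
    apply/seteqP; split => y /=; rewrite /rellik ler_pdivrMr //.
  have := @measurable_fun_ler _ _ _ setT (f th) (fun y => c * f (thetahat y) y)
    (f_meas th) (measurable_funM (measurable_cst c) mle_meas) measurableT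
    [set true] I.
  by rewrite setTI.
split.
  move=> H; apply: ge_ereal_sup => _ [th Hth <-].
  apply: le_trans (K th); apply: outer_mono => y /= h.
  apply: le_trans h; apply: ereal_sup_ubound; exists th => //.
apply: ge_ereal_sup => _ [th _ <-].
apply: le_trans (K th); apply: outer_mono => y /= h.
by rewrite leNgt; apply/negP.
Qed.
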